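(* Let $X$ be a regular ultrametric space with a Borel measure $\nu$, and let $\{\Psi_{Ij}\}$ be the ultrametric wavelets on $X$. Let $I_0\subset X$ be a ball with $\nu(I_0)>0$. Then for every complex number $u_0$ and every family of complex numbers $\{u_{Ij}\}$ (indexed like the wavelets) there exists a unique generalized function $u\in D'(X)$ such that $$u(\chi_{I_0})=u_0\,\nu(I_0),\qquad u\big(\overline{\Psi_{Ij}}\big)=u_{Ij}\quad\text{for all } I,j.$$
   Context: An ultrametric space $X$ is regular if: (1) the set of balls of nonzero diameter is finite or countable; (2) for every decreasing sequence of balls the diameters tend to zero; (3) every ball of nonzero diameter is a finite union of maximal subballs. $\nu$ is a $\sigma$-additive Borel measure on $X$. $\mathcal T(X)$ denotes the set of all balls of nonzero diameter together with the zero-diameter balls which are maximal subballs of balls of nonzero diameter, partially ordered by inclusion; the non-minimal vertices are the balls of nonzero diameter. For a ball $I$ of nonzero diameter, $V^0(I)$ is the space of linear combinations of characteristic functions of the maximal subballs of $I$ having zero mean with respect to $\nu$; $\{\Psi_{Ij}\}_j$ is a fixed orthonormal basis of $V^0(I)$ in $L^2(X,\nu)$ (for $j=1,\dots,p_I-1$, $p_I$ the number of maximal subballs of $I$, when these all have positive measure). The ultrametric wavelets are all $\Psi_{Ij}$ with $I$ running over balls of nonzero diameter. $\chi_I$ is the characteristic function of $I$. The test function space $D(X)$ is the space of locally constant compactly supported complex functions on $X$; it is filtered by the finite-dimensional spaces $D(\mathcal S)=\mathrm{span}\{\chi_J:J\in\mathcal S\}$ for finite subtrees $\mathcal S\subset\mathcal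 T(X)$ of regular type (closed under suprema of pairs, containing all balls between two of its comparable balls, and containing all maximal subballs of $I$ whenever it contains $I$ and one maximal subball of $I$), with a sequence converging iff it lies in some $D(\mathcal S)$ and converges there. $D'(X)$ is the space of linear functionals on $D(X)$ (generalized functions). A locally integrable function $g$ acts on test functions by $g(\varphi)=\int_X g\varphi\,d\nu$. *)

(* Defs.v *)
From HB Require Import structures.
From mathcomp Require Import all_boot all_order all_algebra finmap.
From mathcomp Require Import all_classical all_reals all_analysis.
From mathcomp Require Import complex.
Set Implicit Arguments. Unset Strict Implicit. Unset Printing Implicit Defensive.
Import Order.TTheory GRing.Theory Num.Theory numFieldTopology.Exports numFieldNormedType.Exports.
Local Open Scope ring_scope.
Local Open Scope classical_set_scope.

Section Ultrametric.
Context {R : realType} {T : Type}.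
Variable dist : T -> T -> R.

Definition ultrametric : Prop :=
  [/\ (forall x y, 0 <= dist x y),
      (forall x y, dist x y = 0 <-> x = y),
      (forall x y, dist x y = dist y x) &
      (forall x y z, dist x z <= Num.max (dist x y) (dist y z))].

Definition cball (x : T) (r : R) : set T := [set y | dist x y <= r].
Definition is_ball (B : set T) : Prop := exists x r, 0 <= r /\ B = cball x r.

Definition diam (B : set T) : R :=
  sup [set r | exists x y, B x /\ B y /\ r = dist x y].

Definition posball (B : set T) : Prop := is_ball B /\ diam B != 0.

Definition maxsub (J I : set T) : Prop :=
  [/\ is_ball J, J `<` I &
      forall K, is_ball K -> J `<=` K -> K `<=` I -> K = J \/ K = I].

Definition maxsubs (I : set T) : set (set T) := [set J | maxsub J I].

Definition vertex (J : set T) : Prop :=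
  posball J \/ [/\ is_ball J, diam J = 0 & exists I, posball I /\ maxsub J I].

Definition regular : Prop :=
  [/\ countable [set B | posball B],
      (forall B : nat -> set T, (forall n, is_ball (B n)) ->
          (forall n, B n.+1 `<` B n) ->
          (fun n => diam (B n)) @ \oo --> (0 : R)) &
      (forall I, posball I ->
          finite_set (maxsubs I) /\ \bigcup_(J in maxsubs I) J = I)].

Definition dopen (A : set T) : Prop :=
  forall x, A x -> exists2 e : R, 0 < e & [set y | dist x y < e] `<=` A.

Definition chi (A : set T) : T -> R[i] := \1_A.

(* test functions D(X): finite complex linear combinations of characteristic
   functions of vertices of T(X) (= union of the D(S), S finite subtrees) *)
Definition is_test (f : T -> R[i]) : Prop :=
  exists (n : nat) (c : nat -> R[i]) (J : nat -> set T),
    (forall k, (k < n)%N -> vertex (J k)) /\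
    f = (fun x => \sum_(k < n) c k * chi (J k) x).

Definition is_genfun (u : (T -> R[i]) -> R[i]) : Prop :=
  forall (a : R[i]) f g, is_test f -> is_test g ->
    u (fun x => a * f x + g x) = a * u f + u g.

End Ultrametric.

Section Measure.
Context {R : realType} {d : measure_display} {T : measurableType d}.
Variable dist : T -> T -> R.
Variable nu : {measure set T -> \bar R}.

Definition borel_of_dist : Prop :=
  forall A : set T, measurable A <-> <<s dopen dist >> A.

Definition cintegral (f : T -> R[i]) : R[i] :=
  Complex (fine (\int[nu]_x (complex.Re (f x))%:E)%E)
          (fine (\int[nu]_x (complex.Im (f x))%:E)%E).

Definition l2inner (f g : T -> R[i]) : R[i] := cintegral (fun x => f x * (g x)^*).

Definition V0 (I : set T) (f : T -> R[i]) : Prop :=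
  (exists c : set T -> R[i],
      forall x, f x = \sum_(J \in maxsubs dist I) c J * chi J x)
  /\ cintegral f = 0.

Definition nsub (I : set T) : nat := #|` fset_set (maxsubs dist I)|%fset.

Definition wavelet_basis (Psi : set T -> nat -> T -> R[i]) : Prop :=
  forall I, posball dist I ->
  [/\ (forall j, (j < (nsub I).-1)%N -> V0 I (Psi I j)),
      (forall j k, (j < (nsub I).-1)%N -> (k < (nsub I).-1)%N ->
          l2inner (Psi I j) (Psi I k) = (j == k)%:R) &
      (forall f, V0 I f -> exists a : nat -> R[i],
          forall x, f x = \sum_(j < (nsub I).-1) a j * Psi I j x)].

End Measure.

(* Main.v *)
From Pilot Require Import Defs.
From HB Require Import structures.
From mathcomp Require Import all_boot all_order all_algebra finmap.
From mathcomp Require Import all_classical all_reals all_analysis.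
From mathcomp Require Import complex.
From mathcomp Require Import ring.
Import Order.TTheory GRing.Theory Num.Theory.
Import Pilot.Defs.
Local Open Scope ring_scope.
Local Open Scope classical_set_scope.

Section Geo.
Context {R : realType} {T : Type} (dist : T -> T -> R) (um : ultrametric dist).

Lemma d_ge0 x y : 0 <= dist x y. Proof. by case: um. Qed.
Lemma d_eq0 x y : dist x y = 0 <-> x = y. Proof. by case: um. Qed.
Lemma d_sym x y : dist x y = dist y x. Proof. by case: um. Qed.
Lemma d_tri x y z : dist x z <= Num.max (dist x y) (dist y z). Proof. by case: um. Qed.
Lemma d_xx x : dist x x = 0. Proof. by apply/d_eq0. Qed.

Lemma d_tri' x y z c : dist x y <= c -> dist y z <= c -> dist x z <= c.
Proof. move=> h1 h2; apply: le_trans (d_tri x y z) _; by rewrite ge_max h1 h2. Qed.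

Lemma ball_center {B} : is_ball dist B -> exists x, B x.
Proof. by case=> x [r [r0 ->]]; exists x; rewrite /cball /= d_xx. Qed.

Lemma ball_nested {A B z} : is_ball dist A -> is_ball dist B -> A z -> B z ->
  A `<=` B \/ B `<=` A.
Proof.
case=> a [r [r0 ->]] [b [s [s0 ->]]]; rewrite /cball /= => az bz.
have [rs|sr] := leP r s.
  left=> y /= ay; apply: (@d_tri' _ z) => //.
  by apply: (@d_tri' _ a); [rewrite d_sym; exact: le_trans az rs|exact: le_trans ay rs].
right=> y /= ay; have sr' := ltW sr.
apply: (@d_tri' _ z) => //.
by apply: (@d_tri' _ b); [rewrite d_sym; exact: le_trans bz sr'|exact: le_trans ay sr'].
Qed.

Lemma ball_bounded {B} : is_ball dist B ->
  exists c, forall x y, B x -> B y -> dist x y <= c.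
Proof.
case=> a [r [r0 ->]]; exists r => x y /= ax ay.
by apply: (@d_tri' _ a) => //; rewrite d_sym.
Qed.

Lemma diam_ge {B x y} : is_ball dist B -> B x -> B y -> dist x y <= diam dist B.
Proof.
move=> bB bx bY; have [c hc] := ball_bounded bB.
apply: ub_le_sup; last by exists x, y.
by exists c => _ [u [v [bu [bv ->]]]]; exact: hc.
Qed.

Lemma posball_pts {K} : posball dist K -> exists x y, [/\ K x, K y & 0 < dist x y].
Proof.
move=> [bK dK]; apply: contrapT => hn; move/eqP: dK; apply.
have [x kx] := ball_center bK.
apply/eqP; rewrite eq_le; apply/andP; split; last first.
  by rewrite -(d_xx x); exact: diam_ge.
apply: ge_sup; first by exists (dist x x), x, x.
move=> _ [u [v [ku [kv ->]]]]; rewrite leNgt; apply/negP => h.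
by apply: hn; exists u, v.
Qed.

Lemma posball_sup K B : posball dist K -> is_ball dist B -> K `<=` B -> posball dist B.
Proof.
move=> pK bB KB; split=> //; have [x [y [kx ky dxy]]] := posball_pts pK.
by rewrite gt_eqF // (lt_le_trans dxy) // diam_ge //; exact: KB.
Qed.

Lemma maxsub_ball {J I} : maxsub dist J I -> is_ball dist J. Proof. by case. Qed.
Lemma maxsub_sub {J I} : maxsub dist J I -> J `<=` I. Proof. by case=> _ []. Qed.

Lemma maxsub_disj M1 M2 I z : maxsub dist M1 I -> maxsub dist M2 I -> M1 z -> M2 z -> M1 = M2.
Proof.
move=> h1 h2 z1 z2.
have [s|s] := ball_nested (maxsub_ball h1) (maxsub_ball h2) z1 z2.
  case: h1 => _ _ /(_ M2 (maxsub_ball h2) s (maxsub_sub h2)) [->//|e].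
  by case: h2 => _ [_ nI] _; exfalso; apply: nI; rewrite e.
case: h2 => _ _ /(_ M1 (maxsub_ball h1) s (maxsub_sub h1)) [->//|e].
by case: h1 => _ [_ nI] _; exfalso; apply: nI; rewrite e.
Qed.

Lemma exists_maxsub K L : regular dist -> is_ball dist K -> posball dist L ->
  K `<=` L -> K <> L -> exists M, maxsub dist M L /\ K `<=` M.
Proof.
move=> [_ _ reg3] bK pL KL KnL; have [_ cov] := reg3 L pL.
have [k kk] := ball_center bK.
have : (\bigcup_(J in maxsubs dist L) J) k by rewrite cov; exact: KL.
move=> -[M hM Mk]; exists M; split => //.
have [KM|MK] := ball_nested bK (maxsub_ball hM) kk Mk; first exact: KM.
case: hM => _ _ /(_ K bK MK KL) [->//|e]; by [].
Qed.

Lemma vertex_ball {J} : vertex dist J -> is_ball dist J.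
Proof. by case=> [[]|[]]. Qed.

Lemma maxsub_vertex J I : posball dist I -> maxsub dist J I -> vertex dist J.
Proof.
move=> pI hJ; have [/eqP d0|dn] := boolP (diam dist J == 0).
  by right; split => //; [exact: maxsub_ball hJ|exists I].
by left; split => //; exact: maxsub_ball hJ.
Qed.

Lemma ball_join P Q : is_ball dist P -> is_ball dist Q ->
  exists L, [/\ is_ball dist L, P `<=` L & Q `<=` L].
Proof.
case=> p [rp [rp0 ->]] [q [rq [rq0 ->]]].
exists (cball dist p (Num.max (Num.max rp rq) (dist p q))); split.
- by exists p, (Num.max (Num.max rp rq) (dist p q)); split => //; rewrite le_max le_max rp0.
- by move=> y; rewrite /cball /= => h; rewrite le_max le_max h.
- move=> y; rewrite /cball /= => h; apply: (@d_tri' _ q); first by rewrite le_max lexx orbT.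
  by rewrite le_max le_max h orbT.
Qed.

Lemma chain (Q : set T -> Prop) K : regular dist -> posball dist K ->
  (forall L M, posball dist L -> maxsub dist M L -> (Q M <-> Q L)) ->
  forall L, posball dist L -> K `<=` L -> (Q K <-> Q L).
Proof.
move=> reg pK step L pL KL; apply: contrapT => hn.
pose bad B := [/\ posball dist B, K `<=` B & ~ (Q K <-> Q B)].
have next B : bad B -> exists M, maxsub dist M B /\ bad M.
  case=> pB KB nB.
  have KnB : K <> B by move=> e; apply: nB; rewrite -e.
  have [M [hM KM]] := exists_maxsub _ _ reg (proj1 pK) pB KB KnB.
  exists M; split => //; split => //.
    exact: posball_sup _ _ pK (maxsub_ball hM) KM.
  move=> h; apply: nB; have := step _ _ pB hM; tauto.
pose f B := if pselect (exists M, maxsub dist M B /\ bad M) is left e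
  then projT1 (cid e) else B.
have fS B : bad B -> maxsub dist (f B) B /\ bad (f B).
  move=> bB; rewrite /f; case: pselect => [e|/(_ (next B bB))//].
  by case: (cid e).
pose Bn n := iter n f L.
have bn n : bad (Bn n).
  elim: n => [|n IH] /=; first by split.
  exact: (fS _ IH).2.
have [x [y [kx ky dxy]]] := posball_pts pK.
have [_ reg2 _] := reg.
have bB n : is_ball dist (Bn n) by case: (bn n) => -[].
have sB n : Bn n.+1 `<` Bn n by case: (fS _ (bn n)) => -[].
have cv := reg2 Bn bB sB.
move/cvgrPdist_lt: cv => /(_ _ dxy) [N _ HN].
have := HN N (leqnn N); rewrite sub0r normrN.
have hb := (bn N); case: hb => pB KB _.
rewrite ltNge => /negP; apply.
apply: le_trans (diam_ge (proj1 pB) (KB _ kx) (KB _ ky)) _.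
by rewrite ler_norm.
Qed.
End Geo.


Section Meas.
Context {R : realType} {d : measure_display} {X : measurableType d}
  (nu : {measure set X -> \bar R}).

Definition mfin (A : set X) := measurable A /\ (nu A < +oo)%E.

Lemma indic_int A : mfin A -> nu.-integrable setT (fun x => (\1_A x : R)%:E).
Proof.
move=> [mA fA]; apply/integrableP; split.
  by apply/measurable_realfun.measurable_EFinP; exact: measurable_realfun.measurable_indic.
rewrite (eq_integral (fun x => (\1_A x : R)%:E)); last first.
  by move=> x _; rewrite /= indicE ger0_norm.
by rewrite integral_indic // setIT.
Qed.

Definition rsum (s : seq (R * set X)) x : R := \sum_(p <- s) p.1 * \1_(p.2) x.

Lemma rsum_int s : (forall p, p \in s -> mfin p.2) ->
  nu.-integrable setT (fun x => (rsum s x)%:E) /\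
  (\int[nu]_x (rsum s x)%:E = (\sum_(p <- s) p.1 * fine (nu p.2))%:E)%E.
Proof.
elim: s => [|p s IH] hs.
  rewrite /rsum; under eq_fun do rewrite big_nil.
  rewrite big_nil; split; last by apply: integral0_eq.
  apply/integrableP; split; first exact: measurable_cst.
  by rewrite integral0_eq // => x _; rewrite abse0.
have [ip is0] := IH (fun q qs => hs q (@mem_behead _ (p :: s) _ qs)).
have hp := hs p (mem_head _ _).
have ip1 : nu.-integrable setT (fun x => (p.1%:E * (\1_(p.2) x : R)%:E)%E).
  by apply: integrableZl => //; exact: indic_int.
have e : (fun x => (rsum (p :: s) x)%:E) = (fun x => (p.1%:E * (\1_(p.2) x : R)%:E) + (rsum s x)%:E)%E.
  by apply: funext => x; rewrite /rsum big_cons EFinD EFinM.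
rewrite e; split; first by apply: integrableD.
rewrite integralD // integralZl //; last exact: indic_int.
rewrite integral_indic; last by case: hp.
rewrite // setIT is0 big_cons EFinD; congr (_ + _)%E.
rewrite EFinM fineK // ge0_fin_numE //; last by case: hp.
by [].

Qed.
End Meas.

Section CMeas.
Context {R : realType} {d : measure_display} {X : measurableType d}
  (nu : {measure set X -> \bar R}).

Lemma ReD (a b : R[i]) : complex.Re (a + b) = complex.Re a + complex.Re b.
Proof. by case: a; case: b. Qed.
Lemma ImD (a b : R[i]) : complex.Im (a + b) = complex.Im a + complex.Im b.
Proof. by case: a; case: b. Qed.
Lemma mulC_r (a : R[i]) (r : R) : a * (r%:C)%C = Complex (complex.Re a * r) (complex.Im a * r).
Proof. by case: a => a b /=; simpc. Qed.

Definition csum (s : seq (R[i] * set X)) (x : X) : R[i] := \sum_(p <- s) p.1 * chi p.2 x.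
Definition good (s : seq (R[i] * set X)) := forall p, p \in s -> mfin nu p.2.

Lemma chiE (A : set X) x : chi A x = ((\1_A x : R)%:C)%C.
Proof. by rewrite /chi !indicE; case: (x \in A). Qed.

Lemma Re_csum s x : complex.Re (csum s x) = rsum [seq (complex.Re p.1, p.2) | p <- s] x.
Proof.
rewrite /csum /rsum big_map; elim: s => [|p s IH]; first by rewrite !big_nil.
by rewrite !big_cons ReD IH chiE mulC_r.
Qed.

Lemma Im_csum s x : complex.Im (csum s x) = rsum [seq (complex.Im p.1, p.2) | p <- s] x.
Proof.
rewrite /csum /rsum big_map; elim: s => [|p s IH]; first by rewrite !big_nil.
by rewrite !big_cons ImD IH chiE mulC_r.
Qed.

Lemma sum_Complex (s : seq (R[i] * set X)) (g : set X -> R) :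
  \sum_(p <- s) p.1 * ((g p.2)%:C)%C =
  Complex (\sum_(p <- s) complex.Re p.1 * g p.2) (\sum_(p <- s) complex.Im p.1 * g p.2).
Proof.
elim: s => [|p s IH]; first by rewrite !big_nil.
by rewrite !big_cons IH mulC_r.
Qed.

Lemma cint_csum s : good s ->
  cintegral nu (csum s) = \sum_(p <- s) p.1 * ((fine (nu p.2))%:C)%C.
Proof.
move=> gs; rewrite /cintegral (sum_Complex s (fun A => fine (nu A))).
have gR : forall (f : R[i] -> R) p, p \in [seq (f q.1, q.2) | q <- s] -> mfin nu p.2.
  by move=> f p /mapP [q qs ->]; exact: gs.
under eq_integral do rewrite Re_csum.
under [X in Complex _ (fine X)]eq_integral do rewrite Im_csum.
rewrite (rsum_int nu _ (gR (@complex.Re R))).2 (rsum_int nu _ (gR (@complex.Im R))).2 /= !big_map.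
by [].
Qed.
End CMeas.

Section Nice.
Context {R : realType} {d : measure_display} {X : measurableType d}
  (nu : {measure set X -> \bar R}).

Definition sscale (a : R[i]) (s : seq (R[i] * set X)) := [seq (a * p.1, p.2) | p <- s].
Definition sconj (s : seq (R[i] * set X)) := [seq ((p.1)^*%C, p.2) | p <- s].
Definition smul (s t : seq (R[i] * set X)) :=
  [seq (p.1.1 * p.2.1, p.1.2 `&` p.2.2) | p <- [seq (p, q) | p <- s, q <- t]].

Lemma csum_cat (s t : seq (R[i] * set X)) (x : X) : csum (s ++ t) x = csum s x + csum t x.
Proof. by rewrite /csum big_cat. Qed.
Lemma csum_scale (a : R[i]) (s : seq (R[i] * set X)) (x : X) : csum (sscale a s) x = a * csum s x.
Proof. by rewrite /csum big_map mulr_sumr; apply: eq_bigr => p _; rewrite mulrA. Qed.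
Lemma csum_conj (s : seq (R[i] * set X)) (x : X) : csum (sconj s) x = (csum s x)^*%C.
Proof.
rewrite /csum big_map rmorph_sum; apply: eq_bigr => p _.
by rewrite rmorphM /= chiE conjc_real.
Qed.
Lemma csum_mul (s t : seq (R[i] * set X)) (x : X) : csum (smul s t) x = csum s x * csum t x.
Proof.
rewrite /csum big_map big_allpairs mulr_suml; apply: eq_bigr => p _.
rewrite mulr_sumr; apply: eq_bigr => q _ /=.
rewrite !chiE indicI /= rmorphM /=.
by rewrite -!mulrA; congr (_ * _); rewrite mulrCA.
Qed.
Lemma csum_nil (x : X) : csum [::] x = 0 :> R[i]. Proof. by rewrite /csum big_nil. Qed.

Lemma good_cat (s t : seq (R[i] * set X)) : good nu s -> good nu t -> good nu (s ++ t).
Proof. by move=> gs gt p; rewrite mem_cat => /orP[/gs|/gt]. Qed.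
Lemma good_scale (a : R[i]) (s : seq (R[i] * set X)) : good nu s -> good nu (sscale a s).
Proof. by rewrite /sscale => gs p /mapP [q qs ->]; exact: gs _ qs. Qed.
Lemma good_conj (s : seq (R[i] * set X)) : good nu s -> good nu (sconj s).
Proof. by rewrite /sconj => gs p /mapP [q qs ->]; exact: gs _ qs. Qed.
Lemma good_mul (s t : seq (R[i] * set X)) : good nu s -> good nu t -> good nu (smul s t).
Proof.
rewrite /smul => gs gt p /mapP [[q r] /allpairsP [[q' r'] [q's r't [-> ->]]] ->] /=.
have [mq fq] := gs _ q's; have [mr fr] := gt _ r't.
split; first exact: measurableI.
apply: le_lt_trans fq; apply: le_measure; rewrite ?inE //.
exact: measurableI.
Qed.

Definition nice (f : X -> R[i]) := exists s, good nu s /\ f = csum s.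

Lemma nice0 : nice (fun=> 0 : R[i]).
Proof. by exists [::]; split => //; apply: funext => x; rewrite csum_nil. Qed.
Lemma nice_lin (a : R[i]) (f g : X -> R[i]) : nice f -> nice g -> nice (fun x => a * f x + g x).
Proof.
move=> [s [gs ->]] [t [gt ->]]; exists (sscale a s ++ t); split.
  by apply: good_cat => //; exact: good_scale.
by apply: funext => x; rewrite csum_cat csum_scale.
Qed.
Lemma nice_conj (f : X -> R[i]) : nice f -> nice (fun x => (f x)^*%C).
Proof.
move=> [s [gs ->]]; exists (sconj s); split; first exact: good_conj.
by apply: funext => x; rewrite csum_conj.
Qed.
Lemma nice_mul (f g : X -> R[i]) : nice f -> nice g -> nice (fun x => f x * g x).
Proof.
move=> [s [gs ->]] [t [gt ->]]; exists (smul s t); split; first exact: good_mul.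
by apply: funext => x; rewrite csum_mul.
Qed.
Lemma nice_chi A : mfin nu A -> nice (chi A).
Proof.
move=> hA; exists [:: (1, A)]; split; first by move=> p; rewrite inE => /eqP ->.
by apply: funext => x; rewrite /csum big_cons big_nil mul1r addr0.
Qed.

Lemma cint0 : cintegral nu (fun=> 0 : R[i]) = 0.
Proof.
have -> : (fun=> 0) = csum [::] :> (X -> R[i]) by apply: funext => x; rewrite csum_nil.
by rewrite cint_csum // big_nil.
Qed.
Lemma cint_lin (a : R[i]) (f g : X -> R[i]) : nice f -> nice g ->
  cintegral nu (fun x => a * f x + g x) = a * cintegral nu f + cintegral nu g.
Proof.
move=> [s [gs ->]] [t [gt ->]].
have -> : (fun x => a * csum s x + csum t x) = csum (sscale a s ++ t).
  by apply: funext => x; rewrite csum_cat csum_scale.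
rewrite !cint_csum //; last by apply: good_cat => //; exact: good_scale.
rewrite big_cat big_map mulr_sumr; congr (_ + _); apply: eq_bigr => p _.
by rewrite mulrA.
Qed.
Lemma cint_conj (f : X -> R[i]) : nice f -> cintegral nu (fun x => (f x)^*%C) = (cintegral nu f)^*%C.
Proof.
move=> [s [gs ->]].
have -> : (fun x => (csum s x)^*%C) = csum (sconj s) by apply: funext => x; rewrite csum_conj.
rewrite !cint_csum //; last exact: good_conj.
rewrite big_map rmorph_sum; apply: eq_bigr => p _.
by case: p => [[a b] A] /=; simpc.
Qed.
Lemma cint_chi A : mfin nu A -> cintegral nu (chi A) = ((fine (nu A))%:C)%C.
Proof.
move=> hA.
have -> : chi A = csum [:: (1 : R[i], A)] :> (X -> R[i]) by apply: funext => x /=; rewrite /csum big_cons big_nil mul1r addr0.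
by rewrite cint_csum ?big_cons ?big_nil ?mul1r ?addr0 // => p; rewrite inE => /eqP ->.
Qed.
End Nice.


Section UMM.
Context {R : realType} {d : measure_display} {X : measurableType d}
  (dist : X -> X -> R) (nu : {measure set X -> \bar R})
  (um : ultrametric dist) (borel : borel_of_dist dist)
  (pfin : forall I, posball dist I -> (nu I < +oo)%E).

Lemma dopen_meas A : dopen dist A -> measurable A.
Proof. by move=> h; apply/borel; exact: sub_sigma_algebra. Qed.

Lemma ball_meas B : is_ball dist B -> measurable B.
Proof.
case=> x [r [r0 ->]]; have [rp|r0'] := ltP 0 r.
  apply: dopen_meas => y /= xy; exists r => // z /= yz.
  by apply: (@d_tri' _ _ dist um _ y) => //; exact: ltW.
have r00 : r = 0 by apply/eqP; rewrite eq_le r0' r0.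
rewrite -[cball _ _ _]setCK; apply: measurableC; apply: dopen_meas.
move=> y /= nxy; have pxy : 0 < dist x y by rewrite ltNge; apply/negP; rewrite -r00.
exists (dist x y) => // z /= yz; rewrite r00 => hz.
have ez : x = z by apply/(d_eq0 dist um _ _)/eqP; rewrite eq_le hz (d_ge0 dist um).
by move: yz; rewrite -ez (d_sym dist um) ltxx.
Qed.

Lemma vertex_mfin J : vertex dist J -> mfin nu J.
Proof.
move=> vJ; split; first exact: ball_meas (vertex_ball dist vJ).
case: vJ => [pJ|[bJ _ [I [pI hJ]]]]; first exact: pfin.
apply: (le_lt_trans _ (pfin I pI)); apply: le_measure; rewrite ?inE.
- exact: ball_meas.
- exact: ball_meas (proj1 pI).
- by case: hJ => _ [].

Qed.
End UMM.

Section FS.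
Context {R : realType} {X : Type} (dist : X -> X -> R) (um : ultrametric dist)
  (reg : regular dist).

Lemma chi_in (A : set X) x : A x -> chi A x = 1 :> R[i].
Proof. by move=> ax; rewrite /chi indicE mem_set. Qed.
Lemma chi_out (A : set X) x : ~ A x -> chi A x = 0 :> R[i].
Proof. by move=> ax; rewrite /chi indicE memNset. Qed.

Lemma fs_in I M (c : set X -> R[i]) x : posball dist I -> maxsub dist M I -> M x ->
  \sum_(J \in maxsubs dist I) c J * chi J x = c M.
Proof.
move=> pI hM Mx; have [fin _] := (let: And3 _ _ r := reg in r) I pI.
rewrite (fsbigD1 M) //= chi_in // mulr1 fsbig1 ?addr0 // => J [hJ nJ].
have [Jx|nJx] := pselect (J x); last by rewrite chi_out ?mulr0.
by exfalso; apply: nJ; exact: (maxsub_disj dist um _ _ _ _ hJ hM Jx Mx).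
Qed.

Lemma fs_out I (c : set X -> R[i]) x : (forall M, maxsub dist M I -> ~ M x) ->
  \sum_(J \in maxsubs dist I) c J * chi J x = 0.
Proof. by move=> h; rewrite fsbig1 // => J hJ; rewrite chi_out ?mulr0 //; exact: h. Qed.
End FS.


Lemma grouping {R : comRingType} {I : eqType} (r : seq (R * I)) (w : I -> R) :
  \sum_(p <- r) p.1 * w p.2 =
  \sum_(m <- undup [seq p.2 | p <- r]) (\sum_(p <- r) p.1 * (p.2 == m)%:R) * w m.
Proof.
under [RHS]eq_bigr do rewrite mulr_suml.
rewrite exchange_big /= [LHS]big_seq [RHS]big_seq; apply: eq_bigr => p pr.
have pU : p.2 \in undup [seq p.2 | p <- r] by rewrite mem_undup; apply/mapP; exists p.
rewrite (bigD1_seq p.2) ?undup_uniq //= eqxx mulr1 big1 ?addr0 // => m /negbTE.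
by rewrite eq_sym => ->; rewrite mulr0 mul0r.
Qed.

Section Main.
Context {R : realType} {d : measure_display} {X : measurableType d}
  (dist : X -> X -> R) (nu : {measure set X -> \bar R})
  (Psi : set X -> nat -> X -> R[i])
  (um : ultrametric dist) (reg : regular dist) (borel : borel_of_dist dist)
  (mpos : forall I J, posball dist I -> maxsub dist J I -> (0 < nu J)%E)
  (pfin : forall I, posball dist I -> (nu I < +oo)%E)
  (wb : wavelet_basis dist nu Psi).

Let ms_fin {I} : posball dist I -> finite_set (maxsubs dist I).
Proof. by move=> pI; case: reg => _ _ /(_ I pI) []. Qed.

Let vfin {J} : vertex dist J -> mfin nu J.
Proof. exact: vertex_mfin. Qed.

Definition vj I j := posball dist I /\ (j < (nsub dist I).-1)%N.

Lemma psi_V0 {I j} : vj I j -> V0 dist nu I (Psi I j).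
Proof. by case=> pI jn; case: (wb I pI) => h _ _; exact: h. Qed.

Lemma psi_seq {I j} : vj I j -> exists s : seq (R[i] * set X),
  (forall p, p \in s -> maxsub dist p.2 I) /\ Psi I j = csum s.
Proof.
move=> v; have [[c hc] _] := psi_V0 v; have fin := ms_fin (proj1 v).
exists [seq (c J, J) | J <- fset_set (maxsubs dist I)]; split.
  by move=> p /mapP [J + ->] /=; rewrite in_fset_set // inE.
apply: funext => x; rewrite hc fsbig_finite // /csum big_map.
by [].
Qed.

Lemma psi_nice {I j} : vj I j -> nice nu (Psi I j).
Proof.
move=> v; have [s [hs ->]] := psi_seq v; exists s; split => // p ps.
apply: vfin; exact: (maxsub_vertex dist _ _ (proj1 v) (hs _ ps)).
Qed.

Lemma psi_int0 {I j} : vj I j -> cintegral nu (Psi I j) = 0.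
Proof. by move=> v; case: (psi_V0 v). Qed.

Lemma psi_const I j K : vj I j -> is_ball dist K -> K `<=` I -> K <> I ->
  exists k, forall x, K x -> Psi I j x = k.
Proof.
move=> v bK KI nKI; have [[c hc] _] := psi_V0 v.
have [M [hM KM]] := exists_maxsub dist um _ _ reg bK (proj1 v) KI nKI.
exists (c M) => x Kx; rewrite hc; apply: (fs_in dist um reg _ _ _ _ (proj1 v) hM); exact: KM.
Qed.

Lemma psi_out I j x : vj I j -> ~ I x -> Psi I j x = 0.
Proof.
move=> v nIx; have [[c hc] _] := psi_V0 v.
rewrite hc; apply: fs_out => M hM Mx; apply: nIx; exact: (maxsub_sub dist hM).
Qed.
Lemma cint_scale (a : R[i]) f : nice nu f -> cintegral nu (fun x => a * f x) = a * cintegral nu f.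
Proof.
move=> nf; have := cint_lin nu a _ _ nf (nice0 nu); rewrite cint0 addr0 => <-.
by congr cintegral; apply: funext => x; rewrite addr0.
Qed.

Lemma ortho I j I' j' : vj I j -> vj I' j' ->
  cintegral nu (fun x => (Psi I' j' x)^*%C * Psi I j x) = ((I' == I) && (j' == j))%:R.
Proof.
move=> v v'; have [pI jn] := v; have [pI' jn'] := v'.
case: (eqVneq I' I) => [eI|nII] /=.
  subst I'; case: (wb I pI) => _ on _; have := on j' j jn' jn.
  rewrite /l2inner => h.
  have -> : (fun x => (Psi I j' x)^*%C * Psi I j x) =
            (fun x => (Psi I j' x * (Psi I j x)^*%C)^*%C).
    by apply: funext => x; rewrite rmorphM /= conjcK.
  rewrite cint_conj ?h ?conjc_nat //.
  by apply: nice_mul; [exact: psi_nice|apply: nice_conj; exact: psi_nice].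
apply: (@eq_trans _ _ 0); last by [].
have nII' : I' <> I by apply/eqP.
have [[z [Iz I'z]]|nint] := pselect (exists z, I z /\ I' z); last first.
  rewrite -(cint0 nu); congr cintegral; apply: funext => x.
  have [I'x|nI'x] := pselect (I' x).
    by rewrite (psi_out _ _ x v) ?mulr0 // => Ix; apply: nint; exists x.
  by rewrite (psi_out _ _ x v') // rmorph0 mul0r.
have [s|s] := ball_nested dist um (proj1 pI') (proj1 pI) I'z Iz.
  have [k hk] := psi_const _ _ _ v (proj1 pI') s nII'.
  have -> : (fun x => (Psi I' j' x)^*%C * Psi I j x) = (fun x => k * (Psi I' j' x)^*%C).
    apply: funext => x; have [I'x|nI'x] := pselect (I' x).
      by rewrite hk // mulrC.
    by rewrite (psi_out _ _ x v') // rmorph0 mul0r mulr0.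
  rewrite cint_scale; last by apply: nice_conj; exact: psi_nice.
  by rewrite cint_conj ?psi_int0 ?rmorph0 ?mulr0 //; exact: psi_nice.
have [k hk] := psi_const _ _ _ v' (proj1 pI) s (fun e => nII' (esym e)).
have -> : (fun x => (Psi I' j' x)^*%C * Psi I j x) = (fun x => k^*%C * Psi I j x).
  apply: funext => x; have [Ix|nIx] := pselect (I x).
    by rewrite hk.
  by rewrite (psi_out _ _ x v) // !mulr0.
by rewrite cint_scale ?psi_int0 ?mulr0 //; exact: psi_nice.
Qed.

Context (I0 : set X) (vI0 : vertex dist I0) (nI0 : (0 < nu I0)%E)
  (u0 : R[i]) (uw : set X -> nat -> R[i]).

Definition valid (m : option (set X * nat)) : Prop :=
  if m is Some (B, j) then vj B j else True.
Definition bas (m : option (set X * nat)) : X -> R[i] :=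
  if m is Some (B, j) then (fun x => (Psi B j x)^*%C) else chi I0.
Definition val (m : option (set X * nat)) : R[i] :=
  if m is Some (B, j) then uw B j else u0 * ((fine (nu I0))%:C)%C.
Definition rsB (r : seq (R[i] * option (set X * nat))) (x : X) : R[i] :=
  \sum_(p <- r) p.1 * bas p.2 x.
Definition Vr (r : seq (R[i] * option (set X * nat))) : R[i] :=
  \sum_(p <- r) p.1 * val p.2.
Definition validr (r : seq (R[i] * option (set X * nat))) :=
  forall p, p \in r -> valid p.2.

Lemma validr_cons {p r} : validr (p :: r) -> valid p.2 /\ validr r.
Proof.
move=> h; split; first by apply: h; rewrite mem_head.
by move=> q qr; apply: h; rewrite in_cons qr orbT.
Qed.

Lemma bas_nice {m} : valid m -> nice nu (bas m).
Proof.
case: m => [[I j]|] /= v; last exact: nice_chi (vfin vI0).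
by apply: nice_conj; exact: psi_nice.
Qed.

Lemma rsB_cons p r : rsB (p :: r) = (fun x => p.1 * bas p.2 x + rsB r x).
Proof. by apply: funext => x; rewrite /rsB big_cons. Qed.
Lemma rsB_nil : rsB [::] = (fun=> 0).
Proof. by apply: funext => x; rewrite /rsB big_nil. Qed.

Lemma rsB_nice {r} : validr r -> nice nu (rsB r).
Proof.
elim: r => [|p r IH] h; first by rewrite rsB_nil; exact: nice0.
have [vp vr] := validr_cons h; rewrite rsB_cons.
by apply: nice_lin; [exact: bas_nice|exact: IH].
Qed.

Lemma cint_rsB {r} : validr r ->
  cintegral nu (rsB r) = \sum_(p <- r) p.1 * cintegral nu (bas p.2).
Proof.
elim: r => [|p r IH] h; first by rewrite rsB_nil cint0 big_nil.
have [vp vr] := validr_cons h; rewrite rsB_cons big_cons.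
by rewrite cint_lin ?IH //; [exact: bas_nice|exact: rsB_nice].
Qed.

Lemma cint_rsB_mul {r} {g : X -> R[i]} : validr r -> nice nu g ->
  cintegral nu (fun x => rsB r x * g x) =
  \sum_(p <- r) p.1 * cintegral nu (fun x => bas p.2 x * g x).
Proof.
move=> + ng; elim: r => [|p r IH] h.
  rewrite rsB_nil big_nil -[RHS](cint0 nu); congr cintegral.
  by apply: funext => x; rewrite mul0r.
have [vp vr] := validr_cons h; rewrite rsB_cons big_cons.
rewrite -IH // -cint_lin; last 2 first.
- by apply: nice_mul => //; exact: bas_nice.
- by apply: nice_mul => //; exact: rsB_nice.
by congr cintegral; apply: funext => x; rewrite mulrDl mulrA.
Qed.

Let nC := ((fine (nu I0))%:C)%C : R[i].

Lemma nC_neq0 : nC != 0.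
Proof.
have [_ f] := vfin vI0.
rewrite /nC; apply/eqP => -[] /eqP; rewrite gt_eqF //.
by rewrite fine_gt0 // nI0 f.
Qed.

Definition coef (r : seq (R[i] * option (set X * nat))) m :=
  \sum_(p <- r) p.1 * (p.2 == m)%:R.

Lemma consist r : validr r -> rsB r = (fun=> 0) -> Vr r = 0.
Proof.
move=> vr r0.
have cN : coef r None = 0.
  have := cint_rsB vr; rewrite r0 cint0.
  rewrite (eq_big_seq (fun p => p.1 * ((p.2 == None)%:R * nC))); last first.
    move=> p pr; case: p pr => a [[I j]|] pr /=.
      have v : vj I j := vr _ pr.
      by rewrite mul0r cint_conj ?(psi_int0 v) ?rmorph0 //; exact: psi_nice v.
    by rewrite mul1r cint_chi //; exact: vfin.
  under eq_bigr do rewrite mulrA.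
  rewrite -mulr_suml => /esym/eqP; rewrite mulf_eq0 (negbTE nC_neq0) orbF.
  by move/eqP.
have cS I j : vj I j -> coef r (Some (I, j)) = 0.
  move=> v; have := cint_rsB_mul vr (psi_nice v); rewrite r0.
  rewrite (_ : cintegral nu _ = 0); last first.
    by rewrite -[RHS](cint0 nu); congr cintegral; apply: funext => x; rewrite /= mul0r.
  set g0 := cintegral nu (fun x => chi I0 x * Psi I j x).
  rewrite (eq_big_seq (fun p => p.1 * ((p.2 == None)%:R * g0 + (p.2 == Some (I, j))%:R))); last first.
    move=> p pr; case: p pr => a [[I' j']|] pr /=.
      by rewrite mul0r add0r ortho //; exact: (vr _ pr).
    by rewrite mul1r addr0.
  under eq_bigr do rewrite mulrDr mulrA.
  rewrite big_split /= -mulr_suml.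
  by have := cN; rewrite /coef => ->; rewrite mul0r add0r.
rewrite /Vr grouping big1_seq // => m /andP [_]; rewrite mem_undup => /mapP [p pr ->].
have := vr _ pr; case: p.2 => [[I j]|] v; last by move: cN; rewrite /coef => ->; rewrite mul0r.
by move: (cS _ _ v); rewrite /coef => ->; rewrite mul0r.
Qed.

Definition inS (f : X -> R[i]) := exists r, validr r /\ f = rsB r.

Lemma inS0 : inS (fun=> 0).
Proof. by exists [::]; split; [move=> p|rewrite rsB_nil]. Qed.

Lemma inS_lin (a : R[i]) f g : inS f -> inS g -> inS (fun x => a * f x + g x).
Proof.
move=> [r1 [v1 ->]] [r2 [v2 ->]].
exists ([seq (a * p.1, p.2) | p <- r1] ++ r2); split.
  by move=> p; rewrite mem_cat => /orP [/mapP [q qr ->]|/v2//]; exact: (v1 _ qr).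
apply: funext => x; rewrite /rsB big_cat big_map mulr_sumr; congr (_ + _).
by apply: eq_bigr => p _; rewrite mulrA.
Qed.

Lemma inS_bas m : valid m -> inS (bas m).
Proof.
move=> v; exists [:: (1, m)]; split; first by move=> p; rewrite inE => /eqP ->.
by apply: funext => x; rewrite /rsB big_cons big_nil mul1r addr0.
Qed.

Lemma inS_scale (a : R[i]) f : inS f -> inS (fun x => a * f x).
Proof.
move=> h; have := inS_lin a _ _ h inS0.
by congr inS; apply: funext => x; rewrite addr0.
Qed.

Lemma inS_wav I n (a : nat -> R[i]) : posball dist I -> (n <= (nsub dist I).-1)%N ->
  inS (fun x => \sum_(j < n) a j * (Psi I j x)^*%C).
Proof.
move=> pI; elim: n => [|n IH] hn.
  by have -> : (fun x => \sum_(j < 0) a j * (Psi I j x)^*%C) = (fun=> 0);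
    [apply: funext => x; rewrite big_ord0|exact: inS0].
have -> : (fun x => \sum_(j < n.+1) a j * (Psi I j x)^*%C) =
          (fun x => a n * bas (Some (I, n)) x + \sum_(j < n) a j * (Psi I j x)^*%C).
  by apply: funext => x; rewrite big_ord_recr /= addrC.
apply: inS_lin; last by apply: IH; exact: ltnW.
by apply: inS_bas; split.
Qed.

Lemma step L M : posball dist L -> maxsub dist M L -> (inS (chi M) <-> inS (chi L)).
Proof.
move=> pL hM.
have vM := maxsub_vertex dist _ _ pL hM.
have [mM fM] := vfin vM.
have [mL fL] : mfin nu L by apply: vfin; left.
have nMp : (0 < fine (nu M))%R by rewrite fine_gt0 // (mpos _ _ pL hM) fM.
have nLp : (0 < fine (nu L))%R.
  apply: lt_le_trans nMp _; rewrite fine_le //.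
  - by rewrite ge0_fin_numE.
  - by rewrite ge0_fin_numE.
  by apply: le_measure; rewrite ?inE //; by case: hM => _ [].
pose rr := fine (nu M) / fine (nu L).
have rr0 : rr != 0 by rewrite mulf_neq0 ?invr_eq0 ?gt_eqF.
have rrC0 : (rr%:C)%C != 0 :> R[i] by apply/eqP => -[] /eqP; rewrite (negbTE rr0).
pose f := fun x => (- (rr%:C)%C) * chi L x + chi M x.
have hV : V0 dist nu L f.
  split.
    exists (fun J => (J == M)%:R - (rr%:C)%C) => x.
    have [[J [hJ Jx]]|nJ] := pselect (exists J, maxsub dist J L /\ J x).
      rewrite (fs_in dist um reg _ _ _ _ pL hJ Jx) /f chi_in; last exact: (maxsub_sub dist hJ).
      case: (eqVneq J M) => [eJ|nJM].
        by rewrite chi_in -?eJ // mulr1 addrC.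
      rewrite chi_out ?mulr1 ?addr0 ?add0r //.
      by move=> Mx; move/eqP: nJM; apply; exact: (maxsub_disj dist um _ _ _ _ hJ hM Jx Mx).
    rewrite fs_out; last by move=> J hJ Jx; apply: nJ; exists J.
    rewrite /f (@chi_out _ _ L) ?chi_out ?mulr0 ?addr0 //.
      by move=> Mx; apply: nJ; exists M.
    move=> Lx; case: reg => _ _ /(_ L pL) [_ cov].
    have : (\bigcup_(J in maxsubs dist L) J) x by rewrite cov.
    by move=> [J hJ Jx]; apply: nJ; exists J.
  rewrite /f cint_lin; [|exact: nice_chi|exact: nice_chi].
  rewrite !cint_chi // /rr mulNr -rmorphM /= mulfVK ?gt_eqF //.
  by rewrite addrC subrr.
have [a ha] : exists a : nat -> R[i], forall x, f x = \sum_(j < (nsub dist L).-1) a j * Psi L j x.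
  by case: (wb L pL) => _ _ /(_ f hV).
have freal x : (f x)^*%C = f x.
  by rewrite /f !chiE /rr; simpc; rewrite /= oppr0.
have sf : inS f.
  have -> : f = (fun x => \sum_(j < (nsub dist L).-1) (a j)^*%C * (Psi L j x)^*%C).
    apply: funext => x; rewrite -freal ha rmorph_sum; apply: eq_bigr => j _.
    by rewrite rmorphM.
  exact: (inS_wav L ((nsub dist L).-1) (fun j => (a j)^*%C) pL (leqnn _)).
split => h.
  have -> : chi L = (fun x => ((rr%:C)%C)^-1 * ((-1) * f x + chi M x)).
    apply: funext => x; rewrite /f.
    by field.
  by apply: inS_scale; apply: inS_lin.
have -> : chi M = (fun x => (rr%:C)%C * chi L x + f x).
  by apply: funext => x; rewrite /f; ring.
exact: inS_lin.
Qed.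

Lemma span_vertex J : vertex dist J -> inS (chi J).
Proof.
have [Q [pQ sQ]] : exists Q, posball dist Q /\ inS (chi Q).
  case: vI0 => [pI0|[_ _ [P [pP hI0]]]].
    by exists I0; split => //; exact: (inS_bas None).
  by exists P; split => //; apply/(step _ _ pP hI0); exact: (inS_bas None).
have allp P : posball dist P -> inS (chi P).
  move=> pP; have [L [bL QL PL]] := ball_join dist um _ _ (proj1 pQ) (proj1 pP).
  have pL := posball_sup dist um _ _ pQ bL QL.
  have h1 := chain dist um (fun B => inS (chi B)) Q reg pQ step L pL QL.
  have h2 := chain dist um (fun B => inS (chi B)) P reg pP step L pL PL.
  by apply/h2/h1.
case=> [pJ|[_ _ [P [pP hJ]]]]; first exact: allp.
by apply/(step _ _ pP hJ); exact: allp.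
Qed.

Definition vseq (s : seq (R[i] * set X)) := forall p, p \in s -> vertex dist p.2.

Lemma test_csum s : vseq s -> is_test dist (csum s).
Proof.
move=> vs; exists (size s), (fun k => (nth (0, set0) s k).1), (fun k => (nth (0, set0) s k).2).
split; first by move=> k ks; apply: vs; exact: mem_nth.
by apply: funext => x; rewrite /csum (big_nth (0, set0)) big_mkord.
Qed.

Lemma test_inv f : is_test dist f -> exists s, vseq s /\ f = csum s.
Proof.
move=> [n [c [J [vJ ->]]]]; exists [seq (c k, J k) | k <- iota 0 n]; split.
  by move=> p /mapP [k]; rewrite mem_iota add0n => /andP [_ kn] ->; exact: vJ.
apply: funext => x; rewrite /csum big_map /= -(big_mkord xpredT (fun k => c k * chi (J k) x)).
by rewrite /index_iota subn0.
Qed.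

Lemma test_lin (a : R[i]) f g : is_test dist f -> is_test dist g ->
  is_test dist (fun x => a * f x + g x).
Proof.
move=> /test_inv [s [vs ->]] /test_inv [t [vt ->]].
have -> : (fun x => a * csum s x + csum t x) = csum (sscale a s ++ t).
  by apply: funext => x; rewrite csum_cat csum_scale.
apply: test_csum => p; rewrite mem_cat => /orP [/mapP [q qs ->]|/vt//].
exact: (vs _ qs).
Qed.

Lemma test0 : is_test dist (fun=> 0 : R[i]).
Proof.
have -> : (fun=> 0 : R[i]) = csum [::] :> (X -> R[i]) by apply: funext => x; rewrite csum_nil.
by apply: test_csum => p.
Qed.

Lemma test_bas m : valid m -> is_test dist (bas m).
Proof.
case: m => [[I j]|] /= v.
  have [s [hs ->]] := psi_seq v.
  have -> : (fun x => (csum s x)^*%C) = csum (sconj s).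
    by apply: funext => x; rewrite csum_conj.
  apply: test_csum => p /mapP [q qs ->] /=.
  exact: (maxsub_vertex dist _ _ (proj1 v) (hs _ qs)).
have -> : chi I0 = csum [:: (1 : R[i], I0)] :> (X -> R[i]).
  by apply: funext => x; rewrite /csum big_cons big_nil mul1r addr0.
by apply: test_csum => p; rewrite inE => /eqP ->.
Qed.

Lemma test_rsB r : validr r -> is_test dist (rsB r).
Proof.
elim: r => [|p r IH] h; first by rewrite rsB_nil; exact: test0.
have [vp vr] := validr_cons h; rewrite rsB_cons.
by apply: test_lin; [exact: test_bas|exact: IH].
Qed.

Lemma span_test f : is_test dist f -> inS f.
Proof.
move=> /test_inv [s [vs ->]]; elim: s vs => [|p s IH] vs.
  have -> : csum [::] = (fun=> 0 : R[i]) :> (X -> R[i]) by apply: funext => x; rewrite csum_nil.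
  exact: inS0.
have -> : csum (p :: s) = (fun x => p.1 * chi p.2 x + csum s x).
  by apply: funext => x; rewrite /csum big_cons.
apply: inS_lin; first by apply: span_vertex; apply: vs; rewrite mem_head.
by apply: IH => q qs; apply: vs; rewrite in_cons qs orbT.
Qed.

Definition uf (f : X -> R[i]) : R[i] :=
  if pselect (exists r, validr r /\ f = rsB r) is left e then Vr (projT1 (cid e)) else 0.

Definition rneg (r : seq (R[i] * option (set X * nat))) := [seq (- p.1, p.2) | p <- r].

Lemma rsB_cat r1 r2 x : rsB (r1 ++ r2) x = rsB r1 x + rsB r2 x.
Proof. by rewrite /rsB big_cat. Qed.
Lemma rsB_neg r x : rsB (rneg r) x = - rsB r x.
Proof. by rewrite /rsB big_map -sumrN; apply: eq_bigr => p _; rewrite /= mulNr. Qed.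
Lemma Vr_cat r1 r2 : Vr (r1 ++ r2) = Vr r1 + Vr r2.
Proof. by rewrite /Vr big_cat. Qed.
Lemma Vr_neg r : Vr (rneg r) = - Vr r.
Proof. by rewrite /Vr big_map -sumrN; apply: eq_bigr => p _; rewrite /= mulNr. Qed.

Lemma uf_val r : validr r -> uf (rsB r) = Vr r.
Proof.
move=> vr; rewrite /uf; case: pselect => [e|ne]; last by exfalso; apply: ne; exists r.
case: (cid e) => r' [v' e'] /=.
have vn : validr (r' ++ rneg r).
  by move=> p; rewrite mem_cat => /orP [/v'//|/mapP [q qr ->]]; exact: (vr _ qr).
have z : rsB (r' ++ rneg r) = (fun=> 0).
  by apply: funext => x; rewrite rsB_cat rsB_neg -e' subrr.
by have := consist _ vn z; rewrite Vr_cat Vr_neg => /eqP; rewrite subr_eq0 => /eqP.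
Qed.

Lemma main_sec : exists u : (X -> R[i]) -> R[i],
    [/\ is_genfun dist u,
        u (chi I0) = u0 * ((fine (nu I0))%:C)%C,
        (forall I j, posball dist I -> (j < (nsub dist I).-1)%N ->
           u (fun x => (Psi I j x)^*) = uw I j) &
        (forall v : (X -> R[i]) -> R[i], is_genfun dist v ->
           v (chi I0) = u0 * ((fine (nu I0))%:C)%C ->
           (forall I j, posball dist I -> (j < (nsub dist I).-1)%N ->
              v (fun x => (Psi I j x)^*) = uw I j) ->
           forall f, is_test dist f -> v f = u f)].
Proof.
exists uf; split.
- move=> a f g /span_test [r1 [v1 ->]] /span_test [r2 [v2 ->]].
  have vr : validr ([seq (a * p.1, p.2) | p <- r1] ++ r2).
    by move=> p; rewrite mem_cat => /orP [/mapP [q qr ->]|/v2//]; exact: (v1 _ qr).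
  have -> : (fun x => a * rsB r1 x + rsB r2 x) = rsB ([seq (a * p.1, p.2) | p <- r1] ++ r2).
    apply: funext => x; rewrite /rsB big_cat big_map mulr_sumr; congr (_ + _).
    by apply: eq_bigr => p _; rewrite mulrA.
  rewrite !uf_val // /Vr big_cat big_map mulr_sumr; congr (_ + _).
  by apply: eq_bigr => p _; rewrite mulrA.
- have -> : chi I0 = rsB [:: (1, None)].
    by apply: funext => x; rewrite /rsB big_cons big_nil mul1r addr0.
  by rewrite uf_val ?/Vr ?big_cons ?big_nil ?mul1r ?addr0 // => p; rewrite inE => /eqP ->.
- move=> I j pI jn.
  have -> : (fun x => (Psi I j x)^*%C) = rsB [:: (1, Some (I, j))].
    by apply: funext => x; rewrite /rsB big_cons big_nil mul1r addr0.
  by rewrite uf_val ?/Vr ?big_cons ?big_nil ?mul1r ?addr0 // => p; rewrite inE => /eqP -> /=.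
move=> v gv v0 vw f /span_test [r [vr ->]]; rewrite uf_val //.
have vz : v (fun=> 0 : R[i]) = 0.
  have := gv 1 _ _ test0 test0.
  have -> : (fun x : X => 1 * (0 : R[i]) + 0) = (fun=> 0 : R[i]) by apply: funext => x; rewrite mulr0 addr0.
  by rewrite mul1r => h; apply: (@addrI _ (v (fun=> 0 : R[i]))); rewrite addr0 -h.
elim: r vr => [|p r IH] h; first by rewrite rsB_nil vz /Vr big_nil.
have [vp vr] := validr_cons h; rewrite rsB_cons gv; last 2 first.
- exact: test_bas.
- exact: test_rsB.
rewrite IH // /Vr big_cons; congr (_ * _ + _).
case: p vp {h} => a [[I j]|] /= vp; first by apply: vw; case: vp.
exact: v0.
Qed.
End Main.


Theorem mainTheorem1 (R : realType) (d : measure_display) (X : measurableType d)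
  (dist : X -> X -> R) (nu : {measure set X -> \bar R})
  (Psi : set X -> nat -> X -> R[i]) :
  ultrametric dist -> regular dist -> borel_of_dist dist ->
  (forall I J, posball dist I -> maxsub dist J I -> (0 < nu J)%E) ->
  (forall I, posball dist I -> (nu I < +oo)%E) ->
  wavelet_basis dist nu Psi ->
  forall I0 : set X, vertex dist I0 -> (0 < nu I0)%E ->
  forall (u0 : R[i]) (uw : set X -> nat -> R[i]),
  exists u : (X -> R[i]) -> R[i],
    [/\ is_genfun dist u,
        u (chi I0) = u0 * ((fine (nu I0))%:C)%C,
        (forall I j, posball dist I -> (j < (nsub dist I).-1)%N ->
           u (fun x => (Psi I j x)^*) = uw I j) &
        (forall v : (X -> R[i]) -> R[i], is_genfun dist v ->
           v (chi I0) = u0 * ((fine (nu I0))%:C)%C ->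
           (forall I j, posball dist I -> (j < (nsub dist I).-1)%N ->
              v (fun x => (Psi I j x)^*) = uw I j) ->
           forall f, is_test dist f -> v f = u f)].
Proof.
move=> um reg borel mpos pfin wb I0 vI0 nI0 u0 uw.
exact: (main_sec dist nu Psi um reg borel mpos pfin wb I0 vI0 nI0 u0 uw).
Qed.
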